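(* Let $\lambda,\zeta\leq 0$, $f_S(y)=\zeta y$, $f_F(y)=\lambda y$, $\eta>0$, $\tau>0$, $m,s\in\mathbb{N}$ and $y\in\mathbb{R}$. Then one step of the mROCK2 method with macro-step $\tau$, micro-step $\eta$, $m$ micro stages and $s$ macro stages applied to $\dot y=f_F(y)+f_S(y)$ gives $y_{n+1}=R_{s,m}(\lambda,\zeta,\tau,\eta)\,y_n$ with $$R_{s,m}(\lambda,\zeta,\tau,\eta)=R_s\!\left(\tau\,\Phi_m(\eta\lambda)(\lambda+\zeta)\Bigl(1-\frac{\eta\lambda\alpha_m}{2}\Phi_m(\eta\lambda)\Bigr)\right),$$ where $\Phi_m(z)=\frac{P_m(z)-1}{z}$ ($\Phi_m(0)=1$), $\alpha_m=P_m''(0)$, and $R_s$ is the stability polynomial of the $s$-stage ROCK2 scheme.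
   Context: RKC method (micro method). For damping $\varepsilon\geq 0$ and $m$ stages, let $T_j$ be the Chebyshev polynomials ($T_0=1$, $T_1(x)=x$, $T_j=2xT_{j-1}-T_{j-2}$), $\omega_0=1+\varepsilon/m^2$, $\omega_1=T_m(\omega_0)/T_m'(\omega_0)$, $b_j=1/T_j(\omega_0)$. One step of size $h$ for $\dot u=g(u)$ from $u_0$: $k_0=u_0$, $k_1=k_0+\frac{\omega_1}{\omega_0}h\,g(k_0)$, $k_j=\nu_jk_{j-1}+\kappa_jk_{j-2}+\mu_jh\,g(k_{j-1})$ for $j=2,\dots,m$, with $\mu_j=2\omega_1b_j/b_{j-1}$, $\nu_j=2\omega_0b_j/b_{j-1}$, $\kappa_j=-b_j/b_{j-2}$; the result is $k_m$. Its stability polynomial is $P_m(z)=b_mT_m(\omega_0+\omega_1z)$. ROCK2 method (macro method): an explicit $s$-stage Runge–Kutta method; applied to $\dot y=\kappa y$ with step $\tau$ it gives $y_{n+1}=R_s(\tau\kappa)y_n$, $R_s$ being its stability polynomial. mROCK2 step for $\dot y=f_F(y)+f_S(y)$: define $\bar f_{\eta,2}(y)$ by (i) $u_\eta$ = one RKC step of size $\eta$ for $\dot u=f_F(u)+f_S(y)$, $u(0)=y$; (ii) $\bar f_{\eta,1}(y)=(u_\eta-y)/\eta$; (iii) $v_\eta$ = one RKC step of size $\eta$ for $\dot v=f_F\bigl(v-\frac{\alpha_m\eta}{2}\bar f_{\eta,1}(y)\bigr)+f_S(y)$, $v(0)=y$; (iv) $\bar f_{\eta,2}(y)=(v_\eta-y)/\eta$.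 Then $y_{n+1}$ is one ROCK2 step of size $\tau$ from $y_n$ for $\dot y=\bar f_{\eta,2}(y)$. *)

(* Defs.v *)
From HB Require Import structures.
From mathcomp Require Import all_boot all_order all_algebra.
Set Implicit Arguments. Unset Strict Implicit. Unset Printing Implicit Defensive.
Import Order.TTheory GRing.Theory Num.Theory.
Local Open Scope ring_scope.

Section Defs.
Variable R : realFieldType.

Fixpoint cheb_pair (n : nat) : {poly R} * {poly R} :=
  match n with
  | 0 => (1, 'X)
  | n'.+1 => let p := cheb_pair n' in (p.2, 2%:R *: 'X * p.2 - p.1)
  end.
Definition cheb (n : nat) : {poly R} := (cheb_pair n).1.

Definition omega0 (eps : R) (m : nat) : R := 1 + eps / (m%:R ^+ 2).
Definition omega1 (eps : R) (m : nat) : R :=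
  (cheb m).[omega0 eps m] / ((cheb m)^`()).[omega0 eps m].
Definition rkc_b (eps : R) (m j : nat) : R := ((cheb j).[omega0 eps m])^-1.
Definition rkc_mu eps m j : R := 2 * omega1 eps m * rkc_b eps m j / rkc_b eps m j.-1.
Definition rkc_nu eps m j : R := 2 * omega0 eps m * rkc_b eps m j / rkc_b eps m j.-1.
Definition rkc_kappa eps m j : R := - (rkc_b eps m j / rkc_b eps m j.-2).

(* rkc_ks j = (k_j, k_(j+1)) *)
Fixpoint rkc_ks (eps : R) (m : nat) (g : R -> R) (h u0 : R) (j : nat) : R * R :=
  match j with
  | 0 => (u0, u0 + omega1 eps m / omega0 eps m * h * g u0)
  | j'.+1 => let p := rkc_ks eps m g h u0 j' in
      (p.2, rkc_nu eps m j.+1 * p.2 + rkc_kappa eps m j.+1 * p.1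
              + rkc_mu eps m j.+1 * h * g p.2)
  end.

Definition rkc_step (eps : R) (m : nat) (g : R -> R) (h u0 : R) : R :=
  (rkc_ks eps m g h u0 m).1.

Definition rkc_P (eps : R) (m : nat) : {poly R} :=
  rkc_b eps m m *: (cheb m \Po ((omega0 eps m)%:P + omega1 eps m *: 'X)).
Definition alpha (eps : R) (m : nat) : R := ((rkc_P eps m)^`(2)).[0].
Definition Phi (eps : R) (m : nat) (z : R) : R :=
  if z == 0 then 1 else ((rkc_P eps m).[z] - 1) / z.

(* Explicit s-stage Runge-Kutta method with Butcher coefficients a i j
   (only j < i used) and weights b i. *)
Fixpoint erk_stages (a : nat -> nat -> R) (f : R -> R) (tau y : R) (i : nat)
  : seq R :=
  match i with
  | 0 => [::]
  | i'.+1 => let L := erk_stages a f tau y i' in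
      rcons L (y + tau * \sum_(j < i') a i' j * f (nth 0 L j))
  end.
Definition erk_step (a : nat -> nat -> R) (b : nat -> R) (s : nat)
  (f : R -> R) (tau y : R) : R :=
  let L := erk_stages a f tau y s in
  y + tau * \sum_(i < s) b i * f (nth 0 L i).

Definition erk_A (a : nat -> nat -> R) (s : nat) : 'M[R]_s :=
  \matrix_(i < s, j < s) (if (j < i)%N then a i j else 0).
Definition erk_stab (a : nat -> nat -> R) (b : nat -> R) (s : nat) (z : R) : R :=
  1 + z * (((\row_(i < s) b i) *m invmx (1%:M - z *: erk_A a s)
            *m (const_mx 1 : 'cV[R]_s)) : 'M[R]_1) ord0 ord0.

Definition fbar1 eps m (fF fS : R -> R) (eta y : R) : R :=
  (rkc_step eps m (fun u => fF u + fS y) eta y - y) / eta.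
Definition fbar2 eps m (fF fS : R -> R) (eta y : R) : R :=
  (rkc_step eps m
     (fun v => fF (v - alpha eps m * eta / 2 * fbar1 eps m fF fS eta y) + fS y)
     eta y - y) / eta.
Definition mrock2_step (a : nat -> nat -> R) (b : nat -> R) (s : nat)
  (eps : R) (m : nat) (fF fS : R -> R) (tau eta y : R) : R :=
  erk_step a b s (fbar2 eps m fF fS eta) tau y.
End Defs.

(* Main.v *)
Require Import Defs.
From HB Require Import structures.
From mathcomp Require Import all_boot all_order all_algebra.
From mathcomp Require Import ring lra.
Set Implicit Arguments. Unset Strict Implicit. Unset Printing Implicit Defensive.
Import Order.TTheory GRing.Theory Num.Theory.
Local Open Scope ring_scope.

Section RKC.
Variable R : realFieldType.

Lemma cheb0 : cheb R 0 = 1. Proof. by []. Qed.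
Lemma cheb1 : cheb R 1 = 'X. Proof. by []. Qed.
Lemma chebSS n : cheb R n.+2 = 2%:R *: 'X * cheb R n.+1 - cheb R n.
Proof. by []. Qed.

Lemma chebSS_h (x : R) n :
  (cheb R n.+2).[x] = 2 * x * (cheb R n.+1).[x] - (cheb R n).[x].
Proof. by rewrite chebSS !hornerE. Qed.

Lemma dchebSS_h (x : R) n :
  ((cheb R n.+2)^`()).[x] = 2 * (cheb R n.+1).[x]
     + 2 * x * ((cheb R n.+1)^`()).[x] - ((cheb R n)^`()).[x].
Proof. rewrite chebSS !derivE !hornerE; ring. Qed.

Lemma cheb_ge (x : R) : 1 <= x -> forall n,
  1 <= (cheb R n).[x] <= (cheb R n.+1).[x].
Proof.
move=> hx; elim=> [|n /andP[h1 h2]].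
  by rewrite cheb0 cheb1 !hornerE lexx.
rewrite chebSS_h; apply/andP; split; nra.
Qed.

Lemma dcheb_ge (x : R) : 1 <= x -> forall n,
  0 <= ((cheb R n)^`()).[x] /\ ((cheb R n)^`()).[x] + 1 <= ((cheb R n.+1)^`()).[x].
Proof.
move=> hx; elim=> [|n [h1 h2]].
  rewrite cheb0 cheb1 !derivE !hornerE; split; lra.
have /andP[t1 _] := cheb_ge hx n.+1.
rewrite dchebSS_h; split; nra.
Qed.

Variables (eps : R) (m : nat).
Hypothesis eps0 : 0 <= eps.

Lemma w0ge1 : 1 <= omega0 eps m.
Proof.
rewrite /omega0; have : 0 <= eps / (m%:R ^+ 2).
  by apply: divr_ge0 => //; apply: exprn_ge0; apply: ler0n.
lra.
Qed.

Lemma t_neq0 j : (cheb R j).[omega0 eps m] != 0.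
Proof.
have /andP[h _] := cheb_ge w0ge1 j.
by apply/eqP => e; rewrite e in h; lra.
Qed.

Lemma d_neq0 j : (0 < j)%N -> ((cheb R j)^`()).[omega0 eps m] != 0.
Proof.
case: j => // j _.
have [h1 h2] := dcheb_ge w0ge1 j.
by apply/eqP => e; rewrite e in h2; lra.
Qed.

Lemma w0_neq0 : omega0 eps m != 0.
Proof. have := w0ge1; apply: contraTneq => ->; lra. Qed.

Lemma nu_kappa j : rkc_nu eps m j.+2 + rkc_kappa eps m j.+2 = 1.
Proof.
rewrite /rkc_nu /rkc_kappa /rkc_b /= chebSS_h.
have h0 := t_neq0 j; have h1 := t_neq0 j.+1.
have h2 := t_neq0 j.+2; rewrite chebSS_h in h2.
move: h0 h1 h2.
set a := (cheb R j).[_]; set c := (cheb R j.+1).[_]; set w := omega0 _ _.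
move=> h0 h1 h2; field.
by rewrite h0 h1 h2.
Qed.

Definition q (z : R) j := (rkc_ks eps m (fun u => 1 + z * u) 1 0 j).1.

Lemma q0 z : q z 0 = 0. Proof. by []. Qed.
Lemma q1 z : q z 1 = omega1 eps m / omega0 eps m * 1 * (1 + z * 0).
Proof. by rewrite /q /= add0r. Qed.
Lemma qSS z j : q z j.+2 = rkc_nu eps m j.+2 * q z j.+1 + rkc_kappa eps m j.+2 * q z j
   + rkc_mu eps m j.+2 * 1 * (1 + z * q z j.+1).
Proof. by []. Qed.

Lemma rkc_affine (g : R -> R) (lam h y : R) :
  (forall u e, g (u + e) = g u + lam * e) -> forall j,
  rkc_ks eps m g h y j = (y + h * g y * q (h * lam) j, y + h * g y * q (h * lam) j.+1).
Proof.
move=> Hg; elim=> [|j IH].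
  by rewrite /= q0 q1; congr (_, _); ring.
rewrite [LHS]/= IH /= Hg qSS.
have hk : rkc_kappa eps m j.+2 = 1 - rkc_nu eps m j.+2.
  by rewrite -(nu_kappa j); ring.
rewrite hk; congr (_, _); rewrite /q /=; ring.
Qed.


Lemma qA z j : z * q z j = rkc_b eps m j * (cheb R j).[omega0 eps m + omega1 eps m * z] - 1
  /\ z * q z j.+1 = rkc_b eps m j.+1 * (cheb R j.+1).[omega0 eps m + omega1 eps m * z] - 1.
Proof.
elim: j => [|j [IH0 IH1]].
  rewrite q0 q1 /rkc_b cheb0 cheb1 -polyC1 !hornerC hornerX invr1; split; first ring.
  rewrite hornerX; have hw := w0_neq0; field; exact: hw.
split => //.
have e : z * q z j.+2 = rkc_nu eps m j.+2 * (z * q z j.+1)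
   + rkc_kappa eps m j.+2 * (z * q z j)
   + rkc_mu eps m j.+2 * (z + z * (z * q z j.+1)) by rewrite qSS; ring.
rewrite e IH0 IH1 chebSS_h.
set T0 := (cheb R j).[_]; set T1 := (cheb R j.+1).[_].
have -> : forall nu ka mu B0 B1 : R, nu * (B1 * T1 - 1) + ka * (B0 * T0 - 1) + mu * (z + z * (B1 * T1 - 1))
   = nu * B1 * T1 + ka * B0 * T0 + mu * z * B1 * T1 - (nu + ka) by move=> *; ring.
rewrite nu_kappa /rkc_nu /rkc_kappa /rkc_mu /=.
have h0 := t_neq0 j; have h1 := t_neq0 j.+1.
move: h0 h1; rewrite /rkc_b.
set a := (cheb R j).[omega0 eps m]; set c := (cheb R j.+1).[omega0 eps m].
move=> h0 h1; field.
by rewrite h0 h1 t_neq0.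
Qed.

Lemma qB j : q 0 j = omega1 eps m * rkc_b eps m j * ((cheb R j)^`()).[omega0 eps m]
  /\ q 0 j.+1 = omega1 eps m * rkc_b eps m j.+1 * ((cheb R j.+1)^`()).[omega0 eps m].
Proof.
elim: j => [|j [IH0 IH1]].
  rewrite q0 q1 /rkc_b cheb0 cheb1 -polyC1 derivC derivX horner0 !hornerC invr1; split; first ring. rewrite hornerX; ring.
split => //.
rewrite qSS IH0 IH1 dchebSS_h /rkc_nu /rkc_kappa /rkc_mu /rkc_b /=.
have h0 := t_neq0 j; have h1 := t_neq0 j.+1; have h2 := t_neq0 j.+2.
rewrite chebSS_h in h2 *.
move: h0 h1 h2.
set a := (cheb R j).[omega0 eps m]; set c := (cheb R j.+1).[omega0 eps m].
move=> h0 h1 h2; field.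
by rewrite h0 h1 h2.
Qed.

Hypothesis m0 : (0 < m)%N.

Lemma Phi_q z : Phi eps m z = q z m.
Proof.
rewrite /Phi; have [->|hz] := eqVneq z 0.
  have [-> _] := qB m.
  rewrite /omega1 /rkc_b.
  have := t_neq0 m; have := d_neq0 m0.
  move=> h1 h2; field. by rewrite h1 h2.
have [h _] := qA z m.
rewrite /rkc_P hornerZ horner_comp !hornerE -h.
by field.
Qed.

End RKC.

Section ERK.
Variable R : realFieldType.
Variables (a : nat -> nat -> R) (b : nat -> R) (f : R -> R) (tau y : R).

Lemma size_stages n : size (erk_stages a f tau y n) = n.
Proof. by elim: n => //= n IH; rewrite size_rcons IH. Qed.

Lemma nth_stages n i : (i < n)%N ->
  nth 0 (erk_stages a f tau y n) i = nth 0 (erk_stages a f tau y i.+1) i.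
Proof.
elim: n => // n IH; rewrite ltnS leq_eqVlt => /orP[/eqP ->//|hi].
by rewrite /= nth_rcons size_stages hi IH.
Qed.

Lemma stage_eq s i : (i < s)%N ->
  nth 0 (erk_stages a f tau y s) i
  = y + tau * \sum_(j < i) a i j * f (nth 0 (erk_stages a f tau y s) j).
Proof.
move=> his; rewrite nth_stages // /= nth_rcons size_stages ltnn eqxx.
congr (_ + _ * _); apply: eq_bigr => j _.
rewrite nth_stages // (nth_stages (ltn_trans (ltn_ord j) his)) //.
Qed.

Lemma erk_lin s K : (forall x, f x = K * x) ->
  erk_step a b s f tau y = erk_stab a b s (tau * K) * y.
Proof.
move=> hf.
set z := tau * K.
set L := erk_stages a f tau y s.
set M : 'M[R]_s := 1%:M - z *: erk_A a s.
set Y : 'cV[R]_s := \col_(i < s) nth 0 L i.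
have hMY : M *m Y = y *: const_mx 1.
  apply/matrixP => i j; rewrite (ord1 j) /M mulmxBl mul1mx -scalemxAl !mxE.
  rewrite /L stage_eq // -/L.
  have -> : \sum_(k < s) erk_A a s i k * Y k ord0 = \sum_(k < i) a i k * nth 0 L k.
    rewrite (big_ord_widen s (fun k => a i k * nth 0 L k) (ltnW (ltn_ord i))).
    rewrite [RHS]big_mkcond /=; apply: eq_bigr => k _.
    rewrite /Y !mxE; case: ifP => _ //; by rewrite mul0r.
  rewrite mulr1 /z mulr_sumr; under eq_bigr do rewrite hf.
  rewrite mulr_sumr.
  have -> : \sum_(i0 < i) tau * (a i i0 * (K * nth 0 L i0))
     = \sum_(i0 < i) tau * K * (a i i0 * nth 0 L i0).
    by apply: eq_bigr => k _; ring.
  ring.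
have hU : M \in unitmx.
  rewrite unitmxE det_trig.
    rewrite big1 ?unitr1 // => i _.
    by rewrite /M !mxE eqxx ltnn mulr0 subr0.
  apply/forallP => i; apply/forallP => j; apply/implyP => hij.
  rewrite /M !mxE.
  have -> : (i == j) = false by apply/negbTE; rewrite neq_ltn hij.
  by rewrite ltnNge (ltnW hij) /= mulr0 subr0.
have hY : Y = y *: (invmx M *m const_mx 1).
  by rewrite scalemxAr -hMY mulKmx.
rewrite /erk_step /erk_stab -/L.
have -> : \sum_(i < s) b i * f (nth 0 L i) = K * ((\row_(i < s) b i) *m Y) ord0 ord0.
  rewrite !mxE mulr_sumr; apply: eq_bigr => i _; rewrite !mxE hf; ring.
rewrite hY -scalemxAr mulmxA mxE -/M /z; ring.
Qed.

End ERK.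

Theorem lemma4p4 (R : realFieldType) (a : nat -> nat -> R) (b : nat -> R)
  (s m : nat) (eps lam zeta eta tau y : R) :
  0 <= eps -> (0 < m)%N -> lam <= 0 -> zeta <= 0 -> 0 < eta -> 0 < tau ->
  mrock2_step a b s eps m (fun x => lam * x) (fun x => zeta * x) tau eta y =
  erk_stab a b s
    (tau * Phi eps m (eta * lam) * (lam + zeta)
       * (1 - eta * lam * alpha eps m / 2 * Phi eps m (eta * lam))) * y.
Proof.
move=> he hm _ _ heta _.
set K := Phi eps m (eta * lam) * (lam + zeta)
       * (1 - eta * lam * alpha eps m / 2 * Phi eps m (eta * lam)).
have -> : tau * Phi eps m (eta * lam) * (lam + zeta)
       * (1 - eta * lam * alpha eps m / 2 * Phi eps m (eta * lam)) = tau * K by rewrite /K; ring.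
rewrite /mrock2_step; apply: erk_lin => x.
have hPhi := Phi_q he hm (eta * lam).
have hf1 : fbar1 eps m (fun x => lam * x) (fun x => zeta * x) eta x
   = (lam * x + zeta * x) * Phi eps m (eta * lam).
  rewrite /fbar1 /rkc_step (@rkc_affine R eps m he _ lam) /=; last by move=> u e; ring.
  rewrite hPhi; field; exact: lt0r_neq0.
rewrite /fbar2 /rkc_step (@rkc_affine R eps m he _ lam) /=; last by move=> u e; ring.
rewrite hf1 /K -hPhi; field; exact: lt0r_neq0.
Qed.
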